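(* Let $\varphi\in\mathbb{R}$, let $N$ be a positive integer, and let $N_x,N_y\in\{0,1,\dots,N\}$ satisfy $$\Big|\frac{N_x}{N}-\frac{1+\cos(2\pi\varphi)}{2}\Big|\le 0.306,\qquad \Big|\frac{N_y}{N}-\frac{1+\sin(2\pi\varphi)}{2}\Big|\le 0.306.$$ Put $t=\frac{1}{2\pi}\big(\mathrm{atan2}(2N_y/N-1,\,2N_x/N-1)\big)_{\mathrm{mod}\,2\pi}\in[0,1)$ and $x=(t-1/6)_{\mathrm{mod}\,1}$. Then $(\varphi)_{\mathrm{mod}\,1}$ lies in the open arc $(x,x+1/3)$ on the circle of unit circumference, i.e. $\big((\varphi)_{\mathrm{mod}\,1}-x\big)_{\mathrm{mod}\,1}\in(0,1/3)$.
   Context: $(a)_{\mathrm{mod}\,c}$ denotes the representative of $a$ in $[0,c)$. $\mathrm{atan2}(y,x)$ is the standard two-argument arctangent, the polar angle of the point $(x,y)\ne(0,0)$. *)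

(* Defs.v *)
From Stdlib Require Export Reals.
Open Scope R_scope.

(* floor of a real: Int_part x = up x - 1 is the greatest integer <= x *)
Definition rfloor (a : R) : R := IZR (Int_part a).

Definition rmod (a c : R) : R := a - c * rfloor (a / c).

(* standard two-argument arctangent, value in (-PI, PI];
   the value at the origin (0,0) is an arbitrary convention (0). *)
Definition atan2 (y x : R) : R :=
  if Rlt_dec 0 x then atan (y / x)
  else if Rlt_dec x 0 then
    (if Rle_dec 0 y then atan (y / x) + PI else atan (y / x) - PI)
  else if Rlt_dec 0 y then PI / 2
  else if Rlt_dec y 0 then - (PI / 2)
  else 0.

(* Main.v *)
Require Import Defs.
From Stdlib Require Import Reals.
From Stdlib Require Import Lra Lia Psatz ZArith.
Open Scope R_scope.

Lemma rmod1_spec a : 0 <= rmod a 1 < 1 /\ exists k, rmod a 1 = a - IZR k.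
Proof.
  unfold rmod, rfloor. replace (a/1) with a by field.
  destruct (base_Int_part a). split; [lra | exists (Int_part a); ring].
Qed.

Lemma rmod_shift a c : exists k, rmod a c = a - c * IZR k.
Proof. unfold rmod, rfloor. eexists; reflexivity. Qed.

Lemma cosZ x k : cos (x + 2 * PI * IZR k) = cos x.
Proof.
  destruct k as [|p|p].
  - simpl. f_equal. ring.
  - rewrite <- (cos_period x (Pos.to_nat p)), INR_IZR_INZ, positive_nat_Z.
    f_equal. ring.
  - rewrite <- (cos_period (x + 2 * PI * IZR (Z.neg p)) (Pos.to_nat p)), INR_IZR_INZ, positive_nat_Z.
    rewrite <- Pos2Z.opp_pos, opp_IZR. f_equal. ring.
Qed.

Lemma cos_bound y : -(PI/3) <= y < 5*PI/3 -> cos y > 1/2 -> -(PI/3) < y < PI/3.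
Proof.
  intros [H1 H2] Hc. pose proof PI_RGT_0 as Hpi.
  split.
  - destruct (Req_dec y (-(PI/3))) as [E|E]; [|lra].
    rewrite E, cos_neg, cos_PI3 in Hc. lra.
  - destruct (Rlt_le_dec y (PI/3)) as [L|L]; [exact L|exfalso].
    destruct (Rle_lt_dec y PI) as [L2|L2].
    + pose proof (cos_decr_1 (PI/3) y ltac:(lra) ltac:(lra) ltac:(lra) L2 L).
      rewrite cos_PI3 in H. lra.
    + assert (E : cos y = cos (2*PI - y)).
      { rewrite <- cos_neg. rewrite <- (cos_period (-y) 1). f_equal. simpl. ring. }
      pose proof (cos_decr_1 (PI/3) (2*PI - y) ltac:(lra) ltac:(lra) ltac:(lra) ltac:(lra) ltac:(lra)).
      rewrite cos_PI3, <- E in H. lra.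
Qed.

Lemma atan_facts z : 0 < cos (atan z) /\ sin (atan z) = z * cos (atan z).
Proof.
  destruct (atan_bound z) as [H1 H2].
  assert (Hc : 0 < cos (atan z)) by (apply cos_gt_0; lra).
  split; [exact Hc|].
  pose proof (tan_atan z) as T. unfold tan in T. set (u := atan z) in *.
  rewrite <- T. field. lra.
Qed.

Lemma atan2_spec a b : ~ (a = 0 /\ b = 0) ->
  a * sin (atan2 b a) = b * cos (atan2 b a) /\
  0 < a * cos (atan2 b a) + b * sin (atan2 b a).
Proof.
  intro Hab. unfold atan2.
  destruct (Rlt_dec 0 a) as [Ha|Ha].
  - destruct (atan_facts (b/a)) as [Hc Hs]. rewrite Hs.
    split; [field; lra|].
    replace (a * cos (atan (b / a)) + b * (b / a * cos (atan (b / a))))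
      with (cos (atan (b/a)) * ((a*a+b*b)/a)) by (field; lra).
    apply Rmult_lt_0_compat; [exact Hc|]. apply Rdiv_lt_0_compat; nra.
  - destruct (Rlt_dec a 0) as [Ha'|Ha'].
    + destruct (atan_facts (b/a)) as [Hc Hs].
      assert (K : a * (- sin (atan (b/a))) = b * (- cos (atan (b/a))) /\
                  0 < a * (- cos (atan (b/a))) + b * (- sin (atan (b/a)))).
      { rewrite Hs. split; [field; lra|].
        replace (a * - cos (atan (b / a)) + b * - (b / a * cos (atan (b / a))))
          with (cos (atan (b/a)) * ((a*a+b*b)/(-a))) by (field; lra).
        apply Rmult_lt_0_compat; [exact Hc|]. apply Rdiv_lt_0_compat; nra. }
      destruct (Rle_dec 0 b).
      * rewrite sin_plus, cos_plus, sin_PI, cos_PI.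
        replace (sin (atan (b / a)) * -1 + cos (atan (b / a)) * 0) with (- sin (atan (b/a))) by ring.
        replace (cos (atan (b / a)) * -1 - sin (atan (b / a)) * 0) with (- cos (atan (b/a))) by ring.
        exact K.
      * rewrite sin_minus, cos_minus, sin_PI, cos_PI.
        replace (sin (atan (b / a)) * -1 - cos (atan (b / a)) * 0) with (- sin (atan (b/a))) by ring.
        replace (cos (atan (b / a)) * -1 + sin (atan (b / a)) * 0) with (- cos (atan (b/a))) by ring.
        exact K.
    + assert (a = 0) by lra. subst a.
      destruct (Rlt_dec 0 b).
      * rewrite sin_PI2, cos_PI2. split; lra.
      * destruct (Rlt_dec b 0).
        -- rewrite sin_neg, cos_neg, sin_PI2, cos_PI2. split; lra.
        -- exfalso. apply Hab. split; lra.
Qed.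

Lemma abs_le z e : Rabs z <= e -> -e <= z <= e.
Proof.
  intro H. split.
  - generalize (Rle_abs (-z)); rewrite Rabs_Ropp; lra.
  - generalize (Rle_abs z); lra.
Qed.

Lemma key0 d1 d2 c s : c*c + s*s = 1 -> -(612/1000) <= d1 <= 612/1000 ->
  -(612/1000) <= d2 <= 612/1000 ->
  0 < 1 + (d1*c + d2*s) /\ 1 + 2*(d1*c+d2*s) + (d1*d1+d2*d2) < 4 * (1 + (d1*c+d2*s))^2.
Proof.
  intros Hcs Ha Hb.
  assert (Hq : d1*d1 + d2*d2 < 3/4) by nra.
  assert (Hp : (d1*c + d2*s)*(d1*c + d2*s) <= d1*d1 + d2*d2).
  { assert (0 <= (d1*s - d2*c)^2) by apply pow2_ge_0. nra. }
  generalize dependent (d1*c + d2*s). generalize dependent (d1*d1 + d2*d2).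
  intros q Hq p Hp. split; [nra|].
  assert (0 <= (2*p + 3/2)^2) by apply pow2_ge_0. nra.
Qed.

Lemma key a b c s : c*c + s*s = 1 -> -(612/1000) <= a - c <= 612/1000 ->
  -(612/1000) <= b - s <= 612/1000 ->
  0 < a*c + b*s /\ a*a + b*b < 4 * (a*c+b*s)^2.
Proof.
  intros Hcs Ha Hb.
  destruct (key0 (a-c) (b-s) c s Hcs Ha Hb) as [H1 H2].
  replace (a*c + b*s) with (1 + ((a-c)*c + (b-s)*s)) by nra.
  replace (a*a + b*b) with (1 + 2*((a-c)*c+(b-s)*s) + ((a-c)*(a-c)+(b-s)*(b-s))) by nra.
  auto.
Qed.

Lemma finC k C : 0 < k -> 0 < k*C -> k*k < 4*(k*C)^2 -> C > 1/2.
Proof.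
  intros H1 H2 H3.
  assert (0 < C).
  { destruct (Rlt_le_dec 0 C); auto. nra. }
  assert (1 < 4*(C*C)).
  { apply (Rmult_lt_reg_l (k*k)); [nra|]. nra. }
  nra.
Qed.

Theorem mainTheorem2 (phi : R) (N Nx Ny : nat)
  (hN : (0 < N)%nat) (hNx : (Nx <= N)%nat) (hNy : (Ny <= N)%nat)
  (hx : Rabs (INR Nx / INR N - (1 + cos (2 * PI * phi)) / 2) <= 306 / 1000)
  (hy : Rabs (INR Ny / INR N - (1 + sin (2 * PI * phi)) / 2) <= 306 / 1000) :
  let t := rmod (atan2 (2 * INR Ny / INR N - 1) (2 * INR Nx / INR N - 1)) (2 * PI)
           / (2 * PI) in
  let x := rmod (t - 1 / 6) 1 in
  0 < rmod (rmod phi 1 - x) 1 < 1 / 3.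
Proof.
  intros t x.
  pose proof PI_RGT_0 as Hpi.
  assert (HN : INR N <> 0) by (apply not_0_INR; lia).
  set (c := cos (2 * PI * phi)) in *. set (s := sin (2 * PI * phi)) in *.
  set (a := 2 * INR Nx / INR N - 1) in *. set (b := 2 * INR Ny / INR N - 1) in *.
  apply abs_le in hx. apply abs_le in hy.
  assert (Ea : a = 2 * (INR Nx / INR N) - 1) by (unfold a; field; exact HN).
  assert (Eb : b = 2 * (INR Ny / INR N) - 1) by (unfold b; field; exact HN).
  assert (Hcs : c*c + s*s = 1).
  { unfold c, s. pose proof (sin2_cos2 (2*PI*phi)). unfold Rsqr in H. lra. }
  destruct (key a b c s Hcs ltac:(lra) ltac:(lra)) as [K1 K2].
  set (al := atan2 b a) in *.
  destruct (atan2_spec a b) as [A1 A2].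
  { intros [H0 H1]. rewrite H0, H1 in K1. lra. }
  fold al in A1, A2. clearbody al a b.
  assert (Hcs2 : cos al * cos al + sin al * sin al = 1).
  { pose proof (sin2_cos2 al). unfold Rsqr in H. lra. }
  set (k := a * cos al + b * sin al) in *.
  assert (Ha2 : a = k * cos al).
  { unfold k. replace ((a*cos al + b*sin al)*cos al) with (a*(cos al*cos al + sin al*sin al) - sin al*(a*sin al - b*cos al)) by ring.
    rewrite A1, Hcs2. ring. }
  assert (Hb2 : b = k * sin al).
  { unfold k. replace ((a*cos al + b*sin al)*sin al) with (b*(cos al*cos al + sin al*sin al) + cos al*(a*sin al - b*cos al)) by ring.
    rewrite A1, Hcs2. ring. }
  assert (HC : cos (2*PI*phi - al) > 1/2).
  { rewrite cos_minus. fold c s. set (C := c * cos al + s * sin al).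
    assert (E1 : a*c + b*s = k * C) by (unfold C; rewrite Ha2, Hb2; ring).
    assert (E2 : a*a + b*b = k*k) by (rewrite Ha2, Hb2; nra).
    rewrite E1 in K1, K2. rewrite E2 in K2.
    exact (finC k C A2 K1 K2). }
  destruct (rmod_shift al (2*PI)) as [k1 Hk1].
  destruct (rmod1_spec (t - 1/6)) as [_ [k2 Hk2]].
  destruct (rmod1_spec phi) as [_ [k3 Hk3]].
  destruct (rmod1_spec (rmod phi 1 - x)) as [HD [k4 Hk4]].
  set (D := rmod (rmod phi 1 - x) 1) in *.
  assert (Ey : 2*PI*(D - 1/6) = (2*PI*phi - al) + 2*PI*IZR (k1+k2-k3-k4)).
  { rewrite Hk4, Hk3. unfold x. rewrite Hk2. unfold t. rewrite Hk1.
    rewrite !minus_IZR, !plus_IZR. field. lra. }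
  assert (Hcy : cos (2*PI*(D - 1/6)) > 1/2) by (rewrite Ey, cosZ; exact HC).
  apply cos_bound in Hcy; [|split; nra].
  destruct Hcy as [Y1 Y2].
  split; nra.
Qed.
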